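(* In the $\ell^2$ linear social choice setting, random dictatorship has worst-case distortion $\Omega(d)$.
   Context: Setting ($\ell^2$ linear social choice). Fix a dimension $d$. An instance consists of $n$ voters and $m$ candidates, each a vector in $\mathbb{R}^d_{\ge 0}$ with Euclidean norm $1$, with every voter vector in $\mathrm{Cone}(C)$ (nonnegative linear combinations of the candidate vectors $C$). Utility $u_v(c)=v^\top c$; each voter reports a ranking of $C$ consistent with its utilities (ties broken arbitrarily). $\mathrm{UW}(c)=\sum_v u_v(c)$. Distortion of a randomized rule on an instance: $\max_c\mathrm{UW}(c)/\mathbb{E}_{c\sim f}[\mathrm{UW}(c)]$; worst-case distortion is the supremum over instances, as a function of $d$. Random dictatorship: pick a voter uniformly at random and output its top-ranked candidate. *)

(* Defs.v *)
From HB Require Import structures.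
From mathcomp Require Import all_boot all_order all_algebra all_fingroup.
From mathcomp Require Import reals.
Set Implicit Arguments. Unset Strict Implicit. Unset Printing Implicit Defensive.
Import Order.TTheory GRing.Theory Num.Theory.
Local Open Scope ring_scope.

Section LSC.
Variable R : realType.
Variable d : nat.

Definition vec := 'I_d -> R.

Definition dot (x y : vec) : R := \sum_(i < d) x i * y i.

Definition nonneg_unit (x : vec) : Prop :=
  (forall i, 0 <= x i) /\ dot x x = 1.

Definition in_cone (m : nat) (C : 'I_m -> vec) (x : vec) : Prop :=
  exists lam : 'I_m -> R, (forall j, 0 <= lam j) /\
    forall i, x i = \sum_(j < m) lam j * C j i.

(* Instance with n.+1 voters and m.+1 candidates. A ranking of a voter is a
   permutation sending each candidate to its position (0 = top). *)
Definition valid_instance (n m : nat) (V : 'I_n.+1 -> vec) (C : 'I_m.+1 -> vec)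
  (rk : 'I_n.+1 -> {perm 'I_m.+1}) : Prop :=
  (forall v, nonneg_unit (V v)) /\ (forall c, nonneg_unit (C c)) /\
  (forall v, in_cone C (V v)) /\
  (forall v c c', (rk v c < rk v c')%N -> dot (V v) (C c') <= dot (V v) (C c))
.

Definition UW (n m : nat) (V : 'I_n.+1 -> vec) (C : 'I_m.+1 -> vec) (c : 'I_m.+1) : R :=
  \sum_(v < n.+1) dot (V v) (C c).

Definition top (n m : nat) (rk : 'I_n.+1 -> {perm 'I_m.+1}) (v : 'I_n.+1) : 'I_m.+1 :=
  (rk v)^-1%g ord0.

Definition RD_welfare (n m : nat) (V : 'I_n.+1 -> vec) (C : 'I_m.+1 -> vec)
  (rk : 'I_n.+1 -> {perm 'I_m.+1}) : R :=
  (\sum_(v < n.+1) UW V C (top rk v)) / n.+1%:R.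

Definition RD_distortion (n m : nat) (V : 'I_n.+1 -> vec) (C : 'I_m.+1 -> vec)
  (rk : 'I_n.+1 -> {perm 'I_m.+1}) : R :=
  (\big[Num.max/0]_(c < m.+1) UW V C c) / RD_welfare V C rk.

End LSC.

(* Main.v *)
Require Import Defs.
From mathcomp Require Import all_boot all_order all_algebra all_fingroup.
From mathcomp Require Import reals ring lra.
Import Order.TTheory GRing.Theory Num.Theory.
Local Open Scope ring_scope.

Lemma sum_delta {R : realType} {p : nat} (f : 'I_p -> R) (j : 'I_p) :
  \sum_(i < p) f i * (i == j)%:R = f j.
Proof.
rewrite (bigD1 j) //= eqxx mulr1 big1 ?addr0 // => i /negbTE ->.
by rewrite mulr0.
Qed.

Lemma sum_delta' {R : realType} {p : nat} (f : 'I_p -> R) (j : 'I_p) :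
  \sum_(i < p) f i * (j == i)%:R = f j.
Proof. by rewrite -(sum_delta f j); apply: eq_bigr => i _; rewrite eq_sym. Qed.

Theorem mainTheorem12 (R : realType) :
  exists c : R, 0 < c /\ exists d0 : nat, forall d : nat, (d0 <= d)%N ->
    forall B : R, B < c * d%:R ->
      exists (n m : nat) (V : 'I_n.+1 -> vec R d) (C : 'I_m.+1 -> vec R d)
             (rk : 'I_n.+1 -> {perm 'I_m.+1}),
        valid_instance V C rk /\ B < RD_distortion V C rk.
Proof.
exists (1/4); split; first by rewrite divr_gt0.
exists 2%N => -[|[|n]] // _ B HB.
pose k (v : 'I_n.+1) : 'I_n.+2 := lift ord0 v.
have k0 v : (k v == ord0) = false by [].
pose C (j : 'I_n.+2) : vec R n.+2 := fun i => (i == j)%:R.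
pose V (v : 'I_n.+1) : vec R n.+2 :=
  fun i => 3/5 * (i == ord0)%:R + 4/5 * (i == k v)%:R.
pose one : 'I_n.+2 := lift ord0 ord0.
pose rk (v : 'I_n.+1) : {perm 'I_n.+2} := (tperm ord0 (k v) * tperm one (k v))%g.
have rkk v : rk v (k v) = ord0.
  by rewrite permM tpermR tpermD // eq_sym.
have rk0 v : rk v ord0 = one.
  by rewrite permM tpermL tpermR.
have topk v : top rk v = k v.
  by rewrite /top -(rkk v) permK.
have dotC (x : vec R n.+2) j : dot x (C j) = x j.
  rewrite /dot /C. exact: sum_delta.
have V0 v i : 0 <= V v i.
  by rewrite /V; apply: addr_ge0; apply: mulr_ge0; rewrite ?ler0n ?divr_ge0.
have C0 j i : 0 <= C j i by rewrite /C ler0n.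
have Vk v : V v (k v) = 4/5 by rewrite /V eqxx (k0 v) mulr0 add0r mulr1.
have Vo v : V v ord0 = 3/5 by rewrite /V eqxx eq_sym (k0 v) mulr0 addr0 mulr1.
have dotV (x : vec R n.+2) v : dot x (V v) = 3/5 * x ord0 + 4/5 * x (k v).
  rewrite /dot /V.
  under eq_bigr => i _ do rewrite mulrDr mulrCA [x i * _]mulrCA.
  by rewrite big_split /= -!mulr_sumr !sum_delta.
exists n, n.+1, V, C, rk; split.
  split; [|split; [|split]].
  - move=> v; split => // ; rewrite dotV Vk Vo.
    by field.
  - move=> c; split => //; rewrite dotC /C eqxx //.
  - move=> v; exists (V v); split => // i.
    by rewrite sum_delta'.
  - move=> v c c'; rewrite !dotC.
    have [->|hc'k] := eqVneq c' (k v); first by rewrite rkk.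
    have [->|hc'0] := eqVneq c' ord0.
      rewrite rk0 ltnS leqn0 => /eqP h.
      have -> : c = k v by apply: (perm_inj (s := rk v)); rewrite rkk; apply/val_inj; rewrite /= h.
      by rewrite Vk Vo; lra.
    have -> : V v c' = 0 by rewrite /V (negbTE hc'k) (negbTE hc'0) !mulr0 addr0.
    by move=> _; exact: V0.
have UWk v : UW V C (k v) = 4/5.
  rewrite /UW.
  under eq_bigr => w _ do rewrite dotC /V (k0 v) mulr0 add0r.
  rewrite (bigD1 v) //= eqxx mulr1 big1 ?addr0 // => w hw.
  by rewrite /k (inj_eq (@lift_inj _ ord0)) eq_sym (negbTE hw) mulr0.
have UW0 : UW V C ord0 = n.+1%:R * (3/5).
  rewrite /UW.
  under eq_bigr => w _ do rewrite dotC Vo.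
  by rewrite sumr_const card_ord [in RHS]mulr_natl.
have RDw : RD_welfare V C rk = 4/5.
  rewrite /RD_welfare.
  under eq_bigr => w _ do rewrite topk UWk.
  rewrite sumr_const card_ord -(mulr_natr (4/5)) mulfK //.
  by rewrite pnatr_eq0.
rewrite /RD_distortion RDw.
have hmax : UW V C ord0 <= \big[Num.max/0]_(c < n.+2) UW V C c.
  by rewrite big_ord_recl le_max lexx.
apply: (lt_le_trans HB).
apply: le_trans (_ : UW V C ord0 / (4/5) <= _); last first.
  by rewrite ler_pM2r // invr_gt0 divr_gt0.
rewrite UW0; have -> : (n.+2%:R : R) = n.+1%:R + 1 by rewrite natr1.
have : (1 : R) <= n.+1%:R by rewrite ler1n.
move: (n.+1%:R : R) => x hx.
have -> : x * (3/5) / (4/5) = x * (3/4) by field.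
lra.
Qed.
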